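(* Let $P(X,Y,Z)=X+\frac{1}{X}+Y+\frac{1}{Y}+Z+\frac{1}{Z}-2$ and let $D_P=\{(X,Y,Z)\in(\mathbb{C}^\times)^3 : P(X,Y,Z)=0,\ |X|=|Y|=1,\ |Z|>1\}$. Then \[ D_P=\{(e^{i\phi},e^{i\psi},Z(\phi,\psi)) : \cos\phi+\cos\psi<0\},\quad Z(\phi,\psi)=1-\cos\phi-\cos\psi+\sqrt{(1-\cos\phi-\cos\psi)^2-1}. \] *)

(* Defs.v *)
From Stdlib Require Import Reals.
From Coquelicot Require Import Coquelicot.
Open Scope C_scope.

Definition P (X Y Z : C) : C :=
  X + / X + Y + / Y + Z + / Z - RtoC 2.

Definition D_P (X Y Z : C) : Prop :=
  X <> 0 /\ Y <> 0 /\ Z <> 0 /\ P X Y Z = 0 /\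
  Cmod X = 1%R /\ Cmod Y = 1%R /\ (Cmod Z > 1)%R.

Definition expi (phi : R) : C := (cos phi, sin phi).

Definition Zfun (phi psi : R) : C :=
  RtoC (1 - cos phi - cos psi + sqrt ((1 - cos phi - cos psi)^2 - 1))%R.

(* Main.v *)
Require Import Defs.
From Stdlib Require Import Reals Lra Psatz.
From Coquelicot Require Import Coquelicot.

Lemma unit_circle (x y : R) : (x^2 + y^2 = 1)%R -> exists phi, (x, y) = expi phi.
Proof.
  intros H.
  assert (Hb : (-1 <= x <= 1)%R) by (split; nra).
  destruct (Rle_lt_dec 0 y) as [Hy|Hy].
  - exists (acos x). unfold expi. rewrite cos_acos by exact Hb.
    rewrite sin_acos by exact Hb. f_equal.
    replace (1 - x²)%R with (y²) by (unfold Rsqr; nra).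
    now rewrite sqrt_Rsqr.
  - exists (- acos x)%R. unfold expi. rewrite cos_neg, sin_neg, cos_acos by exact Hb.
    rewrite sin_acos by exact Hb. f_equal.
    replace (1 - x²)%R with ((-y)²) by (unfold Rsqr; nra).
    rewrite sqrt_Rsqr by lra. lra.
Qed.

Lemma cmod1 (x y : R) : Cmod (x, y) = 1%R -> (x^2 + y^2 = 1)%R.
Proof.
  unfold Cmod; cbn [fst snd]. intros H.
  rewrite <- (sqrt_sqrt (x^2+y^2)) by nra. rewrite H. ring.
Qed.

Lemma cmodgt1 (x y : R) : (Cmod (x, y) > 1)%R -> (x^2 + y^2 > 1)%R.
Proof.
  unfold Cmod; cbn [fst snd]. intros H.
  rewrite <- (sqrt_sqrt (x^2+y^2)) by nra. nra.
Qed.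

Lemma pair0 (x y : R) : (x, y) = RtoC 0 -> x = 0%R /\ y = 0%R.
Proof. intro H. unfold RtoC in H. injection H. auto. Qed.

Lemma P_comp a b c d e f :
  P (a, b) (c, d) (e, f) =
  ((a + a / (a^2+b^2) + c + c/(c^2+d^2) + e + e/(e^2+f^2) - 2)%R,
   (b + - b / (a^2+b^2) + d + - d/(c^2+d^2) + f + - f/(e^2+f^2) + - 0)%R).
Proof.
  unfold P, Cminus, Cplus, Copp, Cinv, RtoC; simpl. f_equal; ring.
Qed.

Theorem lemma2p2 : forall X Y Z : C,
  D_P X Y Z <->
  exists phi psi : R,
    (cos phi + cos psi < 0)%R /\
    X = expi phi /\ Y = expi psi /\ Z = Zfun phi psi.
Proof.
  intros [x1 y1] [x2 y2] [u v]. split.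
  - intros (HX & HY & HZ & HP & H1 & H2 & H3).
    apply cmod1 in H1. apply cmod1 in H2. apply cmodgt1 in H3.
    rewrite P_comp, H1, H2 in HP.
    pose proof (f_equal fst HP) as Hre. pose proof (f_equal snd HP) as Him.
    unfold RtoC in Hre, Him; cbn [fst snd] in Hre, Him. clear HP.
    set (m := (u^2+v^2)%R) in *.
    assert (Hm : (m <> 0)%R) by lra.
    assert (Hv : v = 0%R).
    { assert (v * (m - 1) = 0)%R.
      { assert (E : (v - v/m = 0)%R) by (rewrite <- Him; field; auto).
        replace (v * (m - 1))%R with (m * (v - v/m))%R by (field; auto).
        rewrite E; ring. }
      apply Rmult_integral in H. lra. }
    subst v. unfold m in *.
    assert (Hu : (u <> 0)%R) by (intro; subst; lra).
    set (a := (1 - x1 - x2)%R).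
    assert (Hq : (u^2 - 2*a*u + 1 = 0)%R).
    { unfold a. replace (u / (u^2+0^2))%R with (/u)%R in Hre by (field; auto).
      apply (Rmult_eq_compat_r u) in Hre. field_simplify in Hre; [|auto]. 
      lra. }
    assert (Ha1 : (-1 <= a)%R).
    { assert (-1 <= x1 <= 1)%R by (split; nra). assert (-1 <= x2 <= 1)%R by (split; nra). unfold a; lra. }
    assert (Hu2 : (u^2 > 1)%R) by (simpl in H3 |- *; lra).
    assert (Hu1 : (u > 1)%R).
    { destruct (Rlt_or_le 1 u) as [h|h]; [exact h|].
      assert (u < -1)%R by nra.
      assert (a * u <= - u)%R by nra. nra. }
    assert (Ha : (a > 1)%R) by nra.
    destruct (unit_circle x1 y1 H1) as [phi Hphi].
    destruct (unit_circle x2 y2 H2) as [psi Hpsi].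
    exists phi, psi. unfold expi in Hphi, Hpsi.
    injection Hphi as E1 E2. injection Hpsi as E3 E4.
    split; [unfold a in Ha; lra|]. split; [unfold expi; congruence|].
    split; [unfold expi; congruence|].
    unfold Zfun, RtoC. rewrite <- E1, <- E3. fold a. f_equal.
    assert (Hs0 : (0 <= a^2 - 1)%R) by nra.
    pose proof (sqrt_sqrt _ Hs0) as Hs. pose proof (sqrt_pos (a^2-1)) as Hsp.
    set (s := sqrt (a^2-1)) in *.
    assert ((u - a - s) * (u - a + s) = 0)%R by nra.
    apply Rmult_integral in H. destruct H as [H|H]; [lra|].
    exfalso. nra.
  - intros (phi & psi & Hc & EX & EY & EZ).
    unfold expi in EX, EY. unfold Zfun, RtoC in EZ.
    apply pair_equal_spec in EX, EY, EZ. destruct EX as [-> ->], EY as [-> ->], EZ as [-> ->].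
    pose proof (sin2_cos2 phi) as S1. pose proof (sin2_cos2 psi) as S2.
    unfold Rsqr in S1, S2.
    set (a := (1 - cos phi - cos psi)%R).
    assert (Ha : (a > 1)%R) by (unfold a; lra).
    assert (Hs0 : (0 <= a^2 - 1)%R) by nra.
    pose proof (sqrt_sqrt _ Hs0) as Hs. pose proof (sqrt_pos (a^2-1)) as Hsp.
    set (s := sqrt (a^2-1)) in *.
    assert (N1 : (cos phi ^2 + sin phi ^2 = 1)%R) by lra.
    assert (N2 : (cos psi ^2 + sin psi ^2 = 1)%R) by lra.
    unfold D_P. repeat split.
    + intro H; apply pair0 in H; destruct H as [H H']; rewrite H, H' in N1; lra.
    + intro H; apply pair0 in H; destruct H as [H H']; rewrite H, H' in N2; lra.
    + intro H; apply pair0 in H; destruct H as [H H']; lra.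
    + rewrite P_comp, N1, N2. unfold RtoC. f_equal.
      * replace ((a + s) ^ 2 + 0 ^ 2)%R with ((a+s)*(a+s))%R by ring.
        assert (Ec : cos psi = (1 - a - cos phi)%R) by (unfold a; ring).
        rewrite Ec. field_simplify; [|lra].
        unfold Rdiv; apply Rmult_eq_0_compat_r. nra.
      * unfold Rdiv; rewrite Rinv_1; ring.
    + unfold Cmod; cbn [fst snd]. rewrite N1. apply sqrt_1.
    + unfold Cmod; cbn [fst snd]. rewrite N2. apply sqrt_1.
    + unfold Cmod; cbn [fst snd]. rewrite <- sqrt_1. apply sqrt_lt_1_alt. nra.
Qed.
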